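(* Let $X$ be an infinite zero-dimensional compact Hausdorff space. Then $X$ is h-homogeneous if and only if $X$ is partition-homogeneous.
   Context: $X$ is h-homogeneous if every nonempty clopen subset of $X$ is homeomorphic to $X$. $X$ is partition-homogeneous if for any two finite ordered partitions of $X$ into the same number $m$ of (nonempty) clopen sets, $(A_1,\dots,A_m)$ and $(B_1,\dots,B_m)$, there is a homeomorphism $h$ of $X$ with $hA_i=B_i$ for $i=1,\dots,m$. *)

(* Defs.v *)
From HB Require Import structures.
From mathcomp Require Import all_boot all_order all_algebra.
From mathcomp Require Import all_classical all_reals all_analysis.
Set Implicit Arguments. Unset Strict Implicit. Unset Printing Implicit Defensive.
Local Open Scope classical_set_scope.

Definition zero_dim_space (X : topologicalType) : Prop :=
  forall (U : set X) (x : X), open U -> U x ->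
    exists V : set X, [/\ clopen V, V x & V `<=` U].

Definition homeomorphic_sets (X Y : topologicalType) (A : set X) (B : set Y) : Prop :=
  exists (f : X -> Y) (g : Y -> X),
    [/\ {within A, continuous f} /\ {within B, continuous g},
        f @` A `<=` B, g @` B `<=` A,
        (forall a, A a -> g (f a) = a) & (forall b, B b -> f (g b) = b)].

Definition self_homeomorphism (X : topologicalType) (h : X -> X) : Prop :=
  exists k : X -> X, [/\ continuous h, continuous k, cancel h k & cancel k h].

Definition h_homogeneous (X : topologicalType) : Prop :=
  forall A : set X, clopen A -> A !=set0 -> homeomorphic_sets A [set: X].

Definition clopen_partition (X : topologicalType) (m : nat) (A : 'I_m -> set X) : Prop :=
  [/\ (forall i, clopen (A i)), (forall i, A i !=set0),
      (forall i j, i != j -> A i `&` A j = set0) &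
      \bigcup_i A i = [set: X]].

Definition partition_homogeneous (X : topologicalType) : Prop :=
  forall (m : nat) (A B : 'I_m -> set X),
    clopen_partition A -> clopen_partition B ->
    exists h : X -> X, self_homeomorphism h /\ (forall i, h @` A i = B i).

(* Main.v *)
Require Import Defs.
From HB Require Import structures.
From mathcomp Require Import all_boot all_order all_algebra.
From mathcomp Require Import all_classical all_reals all_analysis.
Local Open Scope classical_set_scope.

Lemma glue (X Y : topologicalType) (I : Type) (A : I -> set X) (phi : I -> X -> Y) :
  (forall i, open (A i)) -> (forall x, exists i, A i x) ->
  (forall i j x, A i x -> A j x -> phi i x = phi j x) ->
  (forall i, {within A i, continuous phi i}) ->
  exists H : X -> Y, (forall i x, A i x -> H x = phi i x) /\ continuous H.
Proof.
move=> oA cov agr cphi.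
have [H HP] : {H : X -> Y & forall x i, A i x -> H x = phi i x}.
  apply: (@choice X Y (fun x y => forall i, A i x -> y = phi i x)) => x.
  have [i Ai] := cov x; exists (phi i x) => j Aj; exact: agr.
exists H; split => [i x Ax|x]; first exact: HP.
have [i Ai] := cov x.
have := cphi i; rewrite continuous_open_subspace // => /(_ x).
rewrite inE => /(_ Ai) cx.
rewrite /continuous_at (HP x i Ai).
apply: cvg_trans cx; apply: near_eq_cvg.
have : nbhs x (A i) by apply: open_nbhs_nbhs; split.
by apply: filterS => y Ay; rewrite (HP y i Ay).
Qed.
Lemma withinT_cont (X Y : topologicalType) (g : X -> Y) :
  {within [set: X], continuous g} -> continuous g.
Proof. by move=> cg x; have := cg x; rewrite /continuous_at nbhs_subspaceT. Qed.

Lemma cover_of (X : topologicalType) m (A : 'I_m -> set X) :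
  \bigcup_i A i = [set: X] -> forall x, exists i, A i x.
Proof.
move=> uA x; have : (\bigcup_i A i) x by rewrite uA.
by case=> i _ Ai; exists i.
Qed.

Lemma h_to_p (X : topologicalType) : h_homogeneous X -> partition_homogeneous X.
Proof.
move=> hh m A B [cA nA dA uA] [cB nB dB uB].
have hom i : exists p : (X -> X) * (X -> X),
  [/\ {within A i, continuous p.1} /\ {within B i, continuous p.2},
      (forall x, A i x -> B i (p.1 x)), (forall y, B i y -> A i (p.2 y)),
      (forall x, A i x -> p.2 (p.1 x) = x) & (forall y, B i y -> p.1 (p.2 y) = y)].
  have [f1 [g1 [[cf1 /withinT_cont cg1] f1A g1A gf1 fg1]]] := hh _ (cA i) (nA i).
  have [f2 [g2 [[cf2 /withinT_cont cg2] f2A g2A gf2 fg2]]] := hh _ (cB i) (nB i).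
  exists (g2 \o f1, g1 \o f2); split => /=; first split.
  - by move=> x; exact: (continuous_comp (cf1 x) (cg2 (f1 x))).
  - by move=> x; exact: (continuous_comp (cf2 x) (cg1 (f2 x))).
  - by move=> x _; apply: g2A; exists (f1 x).
  - by move=> y _; apply: g1A; exists (f2 y).
  - by move=> x Ax /=; rewrite fg2 // gf1.
  - by move=> y By /=; rewrite fg1 // gf2.
have [p Hp] := choice hom.
have dis (C : 'I_m -> set X) : (forall i j, i != j -> C i `&` C j = set0) ->
    forall i j x, C i x -> C j x -> i = j.
  move=> dC i j x Ci Cj; case: (eqVneq i j) => // /dC E.
  have : (C i `&` C j) x by split.
  by rewrite E.
have [H [HH cH]] : exists H : X -> X, (forall i x, A i x -> H x = (p i).1 x) /\ continuous H.
  apply: glue.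
  - by move=> i; case: (cA i).
  - exact: cover_of.
  - by move=> i j x Ai Aj; rewrite (dis _ dA i j x Ai Aj).
  - by move=> i; case: (Hp i) => [[]].
have [K [KK cK]] : exists K : X -> X, (forall i x, B i x -> K x = (p i).2 x) /\ continuous K.
  apply: glue.
  - by move=> i; case: (cB i).
  - exact: cover_of.
  - by move=> i j x Ai Aj; rewrite (dis _ dB i j x Ai Aj).
  - by move=> i; case: (Hp i) => [[]].
exists H; split.
  exists K; split => // x.
    have [i Ai] := @cover_of _ _ _ uA x; have [_ AB _ e _] := Hp i.
    by rewrite (HH i x Ai) (KK i _ (AB _ Ai)) e.
  have [i Bi] := @cover_of _ _ _ uB x; have [_ _ BA _ e] := Hp i.
  by rewrite (KK i x Bi) (HH i _ (BA _ Bi)) e.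
move=> i; have [_ AB BA _ e] := Hp i; apply/seteqP; split.
  by move=> _ [x Ax <-]; rewrite (HH i x Ax); apply: AB.
by move=> y By; exists ((p i).2 y); [apply: BA | rewrite (HH i _ (BA _ By)) e].
Qed.
Definition two {X : Type} (P Q : set X) : 'I_2 -> set X :=
  fun i => if i == ord0 then P else Q.

Lemma two_part (X : topologicalType) (P : set X) :
  clopen P -> P !=set0 -> ~` P !=set0 -> clopen_partition (two P (~` P)).
Proof.
move=> cP nP nCP; split.
- by move=> i; rewrite /two; case: ifP => _ //; exact: clopenC.
- by move=> i; rewrite /two; case: ifP.
- move=> [[|[|k]] Hi] // [[|[|l]] Hj] //= _; rewrite /two /=.
  + by rewrite setICr.
  + by rewrite setICl.
- apply/seteqP; split => // x _.
  case: (pselect (P x)) => Px.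
    by exists ord0.
  by exists (@Ordinal 2 1 isT).
Qed.

Lemma ph2 (X : topologicalType) (P Q : set X) : partition_homogeneous X ->
  clopen P -> clopen Q -> P !=set0 -> ~` P !=set0 -> Q !=set0 -> ~` Q !=set0 ->
  exists h, self_homeomorphism h /\ h @` P = Q.
Proof.
move=> ph cP cQ nP nCP nQ nCQ.
have [h [sh /(_ ord0)]] := ph 2 _ _ (@two_part _ _ cP nP nCP) (@two_part _ _ cQ nQ nCQ).
by rewrite /two /=; exists h.
Qed.

Lemma p_to_h (X : topologicalType) : ~ finite_set [set: X] -> zero_dim_space X ->
  hausdorff_space X -> partition_homogeneous X -> h_homogeneous X.
Proof.
move=> inf zd hs ph A cA nA.
case: (pselect (A = setT)) => [->|AT].
  exists id, id; split => //.
  by split; apply: continuous_subspaceT => x; exact: cvg_id.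
have nB : ~` A !=set0.
  apply: contrapT => nb; apply: AT; apply/seteqP; split => // x _.
  by apply: contrapT => nAx; apply: nb; exists x.
have [a [a' [Aa Aa' naa]]] : exists a a', [/\ A a, A a' & a != a'].
  apply: contrapT => H; exfalso; apply: inf.
  case: nA => a Aa.
  have Aeq : A = [set a].
    apply/seteqP; split => [x Ax|x ->] //=.
    apply/eqP; apply/negPn/negP => ne; apply: H; by exists x, a.
  have nCB : ~` ~` A !=set0 by rewrite setCK; exists a.
  have [h [_ hA]] := @ph2 _ _ _ ph cA (@clopenC _ A A cA) (ex_intro _ a Aa) nB nB nCB.
  rewrite -(setUv A) -hA Aeq image_set1.
  by rewrite finite_setU; split; exact: finite_set1.
have [U [oU aU a'U]] := hausdorff_accessible hs naa.
rewrite inE in aU; rewrite inE /= in a'U.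
have [V [cV Va VU]] := zd U a oU aU.
pose A1 := A `&` V; pose A2 := A `&` ~` V; pose Q := A2 `|` ~` A.
have QE y : Q y <-> ~ A1 y.
  rewrite /Q /A1 /A2; split.
    by case=> [[Ay nVy] [_ Vy]|nAy [Ay _]].
  move=> nA1; case: (pselect (A y)) => Ay; last by right.
  by left; split => // Vy; apply: nA1.
have cA1 : clopen A1 by apply: clopenI.
have cA2 : clopen A2 by apply: clopenI => //; exact: clopenC.
have a'V : ~ V a' by move=> /VU.
have [h [[k [ch ck hk kh]] hA2]] : exists h, self_homeomorphism h /\ h @` A2 = Q.
  apply: ph2 => //.
  - by apply: clopenU => //; exact: clopenC.
  - by exists a'.
  - by exists a => -[].
  - by exists a'; left.
  - by exists a => /QE; apply.
have oA1 : open A1 by case: cA1.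
have oCA1 : open (~` A1) by case: (@clopenC _ A1 A1 cA1).
pose P b := if b then A1 else ~` A1.
have cov x : exists b, P b x.
  by case: (pselect (A1 x)) => H; [exists true | exists false].
have [f [fE cf]] : exists f : X -> X, (forall b x, P b x -> f x = (if b then id else h) x)
    /\ continuous f.
  apply: glue.
  - by case.
  - exact: cov.
  - by case; case.
  - by case => /=; apply: continuous_subspaceT => // x; exact: cvg_id.
have [g [gE cg]] : exists g : X -> X, (forall b x, P b x -> g x = (if b then id else k) x)
    /\ continuous g.
  apply: glue.
  - by case.
  - exact: cov.
  - by case; case.
  - by case => /=; apply: continuous_subspaceT => // x; exact: cvg_id.
have f1 x : A1 x -> f x = x by move=> H; rewrite (fE true).
have f2 x : ~ A1 x -> f x = h x by move=> H; rewrite (fE false).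
have g1 x : A1 x -> g x = x by move=> H; rewrite (gE true).
have g2 x : ~ A1 x -> g x = k x by move=> H; rewrite (gE false).
have QA2 y : ~ A1 y -> exists2 x, A2 x & h x = y.
  by move=> /QE; rewrite -hA2 => -[x A2x <-]; exists x.
have A2nA1 x : A2 x -> ~ A1 x by move=> [_ nV] [_ Vx].
have hA2Q x : A2 x -> ~ A1 (h x) by move=> H; apply/QE; rewrite -hA2; exists x.
exists f, g; split.
- by split; apply: continuous_subspaceT.
- by [].
- move=> _ [y _ <-]; case: (pselect (A1 y)) => H.
    by rewrite g1 //; case: H.
  have [x A2x <-] := QA2 y H.
  rewrite g2; first by rewrite hk; case: A2x.
  exact: hA2Q.
- move=> x Ax; case: (pselect (A1 x)) => H; first by rewrite f1 // g1.
  have A2x : A2 x by split => // Vx; apply: H.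
  rewrite f2 // g2 ?hk //; exact: hA2Q.
- move=> y _; case: (pselect (A1 y)) => H; first by rewrite g1 // f1.
  have [x A2x <-] := QA2 y H.
  rewrite g2; last exact: hA2Q.
  by rewrite hk f2 //; apply: A2nA1.
Qed.

Theorem proposition2p2 (X : topologicalType) :
  ~ finite_set [set: X] -> zero_dim_space X -> compact [set: X] ->
  hausdorff_space X ->
  (h_homogeneous X <-> partition_homogeneous X).
Proof.
move=> inf zd _ hs; split; first exact: h_to_p.
exact: p_to_h.
Qed.
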